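(* For $n\ge1$, the 2-group $\mathsf{Equiv}_{\mathbf{2Mat}_{\mathbb C}}(n)$ satisfies $\pi_0\cong S_n$, $\pi_1\cong(\mathbb C^* )^n$ with $S_n$ acting by $(\sigma\cdot\boldsymbol\lambda)_i=\lambda_{\sigma^{-1}(i)}$, its classifying class in $H^3(S_n,(\mathbb C^* )^n)$ is trivial, and it is equivalent to the split 2-group $\mathbb G(n)=S_n[0]\ltimes(\mathbb C^* )^n[1]$. An explicit equivalence of 2-groups $\mathbb E(n):\mathbb G(n)\to\mathsf{Equiv}_{\mathbf{2Mat}_{\mathbb C}}(n)$ is given by $\mathbb E(n)(\sigma)=(\mathbf P(\sigma),\mathbf I)$ on objects, by sending a morphism $(\sigma,\boldsymbol\lambda)$ to the 2-automorphism of $(\mathbf P(\sigma),\mathbf I)$ whose only nonempty entries are the $1\times1$ matrices $\lambda_{\sigma(j)}$ in position $(\sigma(j),j)$, $j=1,\dots,n$, and with structural isomorphisms $\mathbb E(n)_2(\sigma,\sigma')=1_{(\mathbf P(\sigma\sigma'),\mathbf I)}$.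
   Context: $\mathbf{2Mat}_{\mathbb C}$: objects integers $n\ge0$; for $n,m\ge1$ a 1-morphism $n\to m$ is $(\mathbf R,s)$ with $\mathbf R$ an $m\times n$ matrix over $\mathbb N$ and $s=(s_i)$ a gauge, $s_i(\mathbf a)\in GL((\mathbf R\mathbf a)_i,\mathbb C)$ for $\mathbf a\in\mathbb N^n$ (equal to $1$ if $(\mathbf R\mathbf a)_i=0$), normalized by $s_i(\mathbf e_j)=\mathbf I_{R_{ij}}$; a 2-morphism $(\mathbf R,s)\Rightarrow(\mathbf R',s')$ is an $m\times n$ array with $(i,j)$ entry an $R'_{ij}\times R_{ij}$ complex matrix if $R_{ij},R'_{ij}\ne0$, empty otherwise; vertical composition entrywise product; composition of 1-morphisms $(\tilde{\mathbf R},\tilde s)\circ(\mathbf R,s)=(\tilde{\mathbf R}\mathbf R,\tilde s\ast s)$ with $(\tilde s\ast s)_k(\mathbf a)=\tilde s_k(\mathbf R\mathbf a)\big(\bigoplus_{i}\mathbf I_{\tilde R_{ki}}\otimes s_i(\mathbf a)\big)\mathbf P(\tilde{\mathbf R}_k,\mathbf R,\mathbf a)\big(\bigoplus_j \tilde s_k(\mathbf R\mathbf e_j)^{-1}\otimes\mathbf I_{a_j}\big)$, $\mathbf P(\cdot)$ fixed permutation matrices of the construction which are identities when $\tilde{\mathbf R}_k$ or $\mathbf a$ is a standard basis vector, $\mathbf R$ is an identity or $\mathbf R$ has one column; horizontal composition $(\tilde{\mathsf T}\circ\mathsf T)_{kj}=\tilde s'_k(\mathbf R'\mathbf e_j)\big(\bigoplus_i\tilde{\mathsf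 T}_{ki}\otimes\mathsf T_{ij}\big)\tilde s_k(\mathbf R\mathbf e_j)^{-1}$; identity $(\mathbf I_n,\mathbf I)$, $\mathbf I$ the trivial gauge. $\mathsf{Equiv}_{\mathfrak C}(X)$ is the 2-group (monoidal groupoid, tensor = composition) of autoequivalences of $X$ and invertible 2-morphisms. $\mathbf P(\sigma)_{ij}=\delta_{i,\sigma(j)}$. The split 2-group $\mathbb G(n)$ has objects $S_n$, morphisms only automorphisms $(\sigma,\boldsymbol\lambda):\sigma\to\sigma$ with $\boldsymbol\lambda\in(\mathbb C^* )^n$, composition $(\sigma,\boldsymbol\lambda')\circ(\sigma,\boldsymbol\lambda)=(\sigma,\boldsymbol\lambda'\boldsymbol\lambda)$, tensor $\sigma\otimes\sigma'=\sigma\sigma'$, $(\sigma_1,\boldsymbol\lambda_1)\otimes(\sigma_2,\boldsymbol\lambda_2)=(\sigma_1\sigma_2,\boldsymbol\lambda_1(\sigma_1\cdot\boldsymbol\lambda_2))$, and identity associator and unit constraints. For a 2-group, $\pi_0$ is the group of isomorphism classes of objects, $\pi_1=\mathrm{Aut}(I)$ with $\pi_0$-action $[A]\cdot u=\gamma_A^{-1}\delta_A(u)$ ($\gamma_A(u)=l_A(u\otimes\mathrm{id}_A)l_A^{-1}$, $\delta_A(u)=r_A(\mathrm{id}_A\otimes u)r_A^{-1}$), and the classifying class is Sinh's invariant in $H^3(\pi_0,\pi_1)$. An equivalence of 2-groups is a monoidal functor whose underlying functor is an equivalence. *)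

(* Defs.v *)
From HB Require Import structures.
From mathcomp Require Import all_boot all_algebra all_fingroup.
From mathcomp Require Import complex mxtens.
From mathcomp Require Import Rstruct.
From Stdlib Require Import ClassicalEpsilon.

Set Implicit Arguments.
Unset Strict Implicit.
Unset Printing Implicit Defensive.

Import GRing.Theory.
Local Open Scope ring_scope.

Notation CC := (complex Rdefinitions.R).

Section TwoMat.
Variable n : nat.

Definition Rapp (R : 'M[nat]_n) (a : 'I_n -> nat) (i : 'I_n) : nat :=
  (\sum_(j < n) R i j * a j)%N.
Definition evec (j : 'I_n) : 'I_n -> nat := fun k => nat_of_bool (k == j).
Definition nmul (R1 R2 : 'M[nat]_n) : 'M[nat]_n :=
  \matrix_(i, j) (\sum_(k < n) R1 i k * R2 k j)%N.
Definition nid : 'M[nat]_n := \matrix_(i, j) nat_of_bool (i == j).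
Definition Pmat (s : 'S_n) : 'M[nat]_n := \matrix_(i, j) nat_of_bool (i == s j).

Definition gaugeT (R : 'M[nat]_n) :=
  forall (i : 'I_n) (a : 'I_n -> nat), 'M[CC]_(Rapp R a i).
(* invertible, normalized by s_i(e_j) = I_{R_ij} (note (R e_j)_i = R_ij);
   when (R a)_i = 0 the 0x0 matrix is automatically "1" *)
Definition is_gauge (R : 'M[nat]_n) (s : gaugeT R) : Prop :=
  (forall i a, s i a \in unitmx) /\ (forall i j, s i (evec j) = 1%:M).
Definition triv_gauge (R : 'M[nat]_n) : gaugeT R := fun i a => 1%:M.

Record mor1 := Mor1 { mat : 'M[nat]_n; gau : gaugeT mat }.

(** 2-morphisms: (i,j) entry is an R'_ij x R_ij matrix
    (when one of R_ij, R'_ij is 0 this type has a single, empty, element) *)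
Definition twomor (R R' : 'M[nat]_n) := forall i j : 'I_n, 'M[CC]_(R' i j, R i j).
Definition vcomp (R R' R'' : 'M[nat]_n) (T' : twomor R' R'') (T : twomor R R')
  : twomor R R'' := fun i j => T' i j *m T i j.
Definition id2 (R : 'M[nat]_n) : twomor R R := fun i j => 1%:M.
Definition iso2 (R R' : 'M[nat]_n) (T : twomor R R') : Prop :=
  exists T' : twomor R' R, vcomp T' T = id2 R /\ vcomp T T' = id2 R'.
Definition inv2 (R R' : 'M[nat]_n) (T : twomor R R') : twomor R' R :=
  epsilon (inhabits (fun i j => 0))
    (fun T' : twomor R' R => vcomp T' T = id2 R /\ vcomp T T' = id2 R').
(* the "identity" 2-morphism between two 1-morphisms with equal matrices
   (entries are identity matrices; well typed even before rewriting R = R') *)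
Definition idmor (R R' : 'M[nat]_n) : twomor R R' :=
  fun i j => \matrix_(r, c) ((nat_of_ord r == nat_of_ord c)%:R : CC).

Lemma Rapp_nmul (Rt R : 'M[nat]_n) a k :
  Rapp Rt (Rapp R a) k = Rapp (nmul Rt R) a k.
Proof.
rewrite /Rapp; under [RHS]eq_bigr do rewrite mxE big_distrl /=.
rewrite exchange_big /=; apply: eq_bigr => i _.
by rewrite big_distrr /=; apply: eq_bigr => j _; rewrite mulnA.
Qed.

Lemma Rapp_evec (R : 'M[nat]_n) j i : Rapp R (evec j) i = R i j.
Proof.
rewrite /Rapp (bigD1 j) //= /evec eqxx muln1 big1 ?addn0 // => k /negPf ->.
by rewrite muln0.
Qed.

Lemma sum_gauge_inv (Rt R : 'M[nat]_n) a k :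
  (\sum_(j < n) Rapp Rt (Rapp R (evec j)) k * a j)%N = Rapp (nmul Rt R) a k.
Proof.
apply: eq_bigr => j _; congr (_ * _)%N; rewrite mxE.
by apply: eq_bigr => i _; rewrite Rapp_evec.
Qed.

Lemma Rapp_nmul_evec (Rt R : 'M[nat]_n) k j :
  Rapp Rt (Rapp R (evec j)) k = nmul Rt R k j.
Proof. by rewrite Rapp_nmul Rapp_evec. Qed.

Lemma sum_nmul (Rt R : 'M[nat]_n) k j :
  (\sum_(i < n) Rt k i * R i j)%N = nmul Rt R k j.
Proof. by rewrite mxE. Qed.

(** composite gauge (st * s)_k(a) =
      st_k(R a) (+)_i (I_{Rt_ki} (x) s_i(a)) P (+)_j (st_k(R e_j)^-1 (x) I_{a_j}).
    The permutation matrix P(Rt_k, R, a) is the identity whenever Rt_k is a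
    standard basis vector, which is the case for all composites occurring in
    Equiv(n) (autoequivalences have permutation matrices); it is taken to be
    the identity here. *)
Definition gcomp (Rt R : 'M[nat]_n) (st : gaugeT Rt) (s : gaugeT R)
  : gaugeT (nmul Rt R) := fun k a =>
  castmx (Rapp_nmul Rt R a k, Rapp_nmul Rt R a k)
    (st k (Rapp R a) *m \mxdiag_(i < n) ((1%:M : 'M[CC]_(Rt k i)) *t s i a))
  *m 1%:M
  *m castmx (sum_gauge_inv Rt R a k, sum_gauge_inv Rt R a k)
    (\mxdiag_(j < n) (invmx (st k (Rapp R (evec j))) *t (1%:M : 'M[CC]_(a j)))).

Definition comp1 (y x : mor1) : mor1 := Mor1 (gcomp (gau y) (gau x)).
Definition id1 : mor1 := Mor1 (triv_gauge nid).

Definition mxget (p q : nat) (M : 'M[CC]_(p, q)) (r c : nat) : CC :=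
  match insub r, insub c with Some r', Some c' => M r' c' | _, _ => 0 end.
Definition bdiag (m : nat) (p_ q_ : 'I_m -> nat)
  (B : forall i, 'M[CC]_(p_ i, q_ i)) : 'M[CC]_((\sum_i p_ i)%N, (\sum_i q_ i)%N) :=
  mxblock (fun i i' => \matrix_(r, c) if i == i' then mxget (B i) r c else 0).

(** horizontal composition
    (Tt o T)_kj = st'_k(R' e_j) ((+)_i Tt_ki (x) T_ij) st_k(R e_j)^-1 *)
Definition hcomp (yt yt' x x' : mor1)
  (Tt : twomor (mat yt) (mat yt')) (T : twomor (mat x) (mat x'))
  : twomor (mat (comp1 yt x)) (mat (comp1 yt' x')) := fun k j =>
  castmx (Rapp_nmul_evec (mat yt') (mat x') k j, Rapp_nmul_evec (mat yt') (mat x') k j)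
    (gau yt' k (Rapp (mat x') (evec j)))
  *m castmx (sum_nmul (mat yt') (mat x') k j, sum_nmul (mat yt) (mat x) k j)
    (bdiag (fun i => Tt k i *t T i j))
  *m castmx (Rapp_nmul_evec (mat yt) (mat x) k j, Rapp_nmul_evec (mat yt) (mat x) k j)
    (invmx (gau yt k (Rapp (mat x) (evec j)))).
Arguments hcomp : clear implicits.

(** autoequivalences of n: there is (R',s') and invertible 2-morphisms
    (R',s') o (R,s) => id and (R,s) o (R',s') => id (the hom-sets of
    2-morphisms only depend on the matrices, here R'R, RR' and I_n). *)
Definition is_equiv1 (R : 'M[nat]_n) : Prop :=
  exists R' : 'M[nat]_n, (exists s' : gaugeT R', is_gauge s') /\
    (exists T : twomor (nmul R' R) nid, iso2 T) /\
    (exists T : twomor (nmul R R') nid, iso2 T).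

Definition isObj (x : mor1) : Prop := is_gauge (gau x) /\ is_equiv1 (mat x).

Definition assocE (x y z : mor1) :
  twomor (mat (comp1 (comp1 x y) z)) (mat (comp1 x (comp1 y z))) := idmor _ _.
Definition lunitE (x : mor1) : twomor (mat (comp1 id1 x)) (mat x) := idmor _ _.
Definition lunitE_inv (x : mor1) : twomor (mat x) (mat (comp1 id1 x)) := idmor _ _.
Definition runitE (x : mor1) : twomor (mat (comp1 x id1)) (mat x) := idmor _ _.
Definition runitE_inv (x : mor1) : twomor (mat x) (mat (comp1 x id1)) := idmor _ _.

Definition gammaA (x : mor1) (u : twomor (mat id1) (mat id1)) : twomor (mat x) (mat x) :=
  vcomp (lunitE x) (vcomp (hcomp id1 id1 x x u (id2 (mat x))) (lunitE_inv x)).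
Definition deltaA (x : mor1) (u : twomor (mat id1) (mat id1)) : twomor (mat x) (mat x) :=
  vcomp (runitE x) (vcomp (hcomp x x id1 id1 (id2 (mat x)) u) (runitE_inv x)).

(** S_n with the composition of the paper: (s t)(j) = s (t j)
    (MathComp's product of permutations is (s * t) j = t (s j)) *)
Definition pmul (s t : 'S_n) : 'S_n := (t * s)%g.
Definition sact (s : 'S_n) (l : 'I_n -> CC) : 'I_n -> CC := fun i => l ((s^-1)%g i).

(** the cocycle attached to a choice of representatives A_s and of
    isomorphisms phi_{s,t} : A_s (x) A_t -> A_{st}, as an automorphism of
    A_{x(yz)}:
    phi_{x,yz} (1 (x) phi_{y,z}) a (phi_{x,y} (x) 1)^-1 phi_{xy,z}^-1 *)
Definition sinh_loop (A : 'S_n -> mor1)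
  (phi : forall s t, twomor (mat (comp1 (A s) (A t))) (mat (A (pmul s t))))
  (x y z : 'S_n) : twomor (mat (A (pmul x (pmul y z)))) (mat (A (pmul x (pmul y z)))) :=
  vcomp (phi x (pmul y z))
  (vcomp (hcomp (A x) (A x) (comp1 (A y) (A z)) (A (pmul y z)) (id2 _) (phi y z))
  (vcomp (assocE (A x) (A y) (A z))
  (vcomp (inv2 (hcomp (comp1 (A x) (A y)) (A (pmul x y)) (A z) (A z) (phi x y) (id2 _)))
  (vcomp (inv2 (phi (pmul x y) z))
         (idmor (mat (A (pmul x (pmul y z)))) (mat (A (pmul (pmul x y) z)))))))).

Definition cobound (h : 'S_n -> 'S_n -> 'I_n -> CC) (x y z : 'S_n) : 'I_n -> CC :=
  fun i => sact x (h y z) i * (h (pmul x y) z i)^-1 * h x (pmul y z) i * (h x y i)^-1.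

Definition EObj (s : 'S_n) : mor1 := Mor1 (triv_gauge (Pmat s)).
(* image of a morphism (s,l) (more generally of the identity morphism s -> t,
   s = t, scaled by l): the (s(j), j) entry is the 1x1 matrix l_{s(j)},
   all other entries are empty *)
Definition Emor (s t : 'S_n) (l : 'I_n -> CC) : twomor (Pmat s) (Pmat t) :=
  fun i j => l i *: \matrix_(r, c) ((nat_of_ord r == nat_of_ord c)%:R : CC).
Definition E2 (s t : 'S_n) : twomor (mat (comp1 (EObj s) (EObj t))) (Pmat (pmul s t)) :=
  idmor _ _.
Definition E0 : twomor (mat id1) (Pmat 1%g) := idmor _ _.

Definition nonzero (l : 'I_n -> CC) : Prop := forall i, l i != 0.

End TwoMat.

Arguments E0 n : clear implicits.
Arguments hcomp {n} yt yt' x x' Tt T _ _.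

(* Main.v *)
Require Import Defs.
From HB Require Import structures.
From mathcomp Require Import all_boot all_order all_algebra all_fingroup.
From mathcomp Require Import complex mxtens Rstruct zify ring.
From Stdlib Require Import FunctionalExtensionality ClassicalEpsilon.
Import GRing.Theory.
Local Open Scope ring_scope.
Set Implicit Arguments.
Unset Strict Implicit.
Unset Printing Implicit Defensive.


Lemma mxgetE p q (M : 'M[CC]_(p,q)) (i : 'I_p) (j : 'I_q) : mxget M i j = M i j.
Proof. by rewrite /mxget !valK. Qed.

Lemma mxget0 p q (M : 'M[CC]_(p.+1,q.+1)) : mxget M 0 0 = M ord0 ord0.
Proof. exact: (mxgetE M ord0 ord0). Qed.

Lemma mxget_outr p q (M : 'M[CC]_(p,q)) r c : (p <= r)%N -> mxget M r c = 0.
Proof. by move=> h; rewrite /mxget insubN // -leqNgt. Qed.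

Lemma mxget_outc p q (M : 'M[CC]_(p,q)) r c : (q <= c)%N -> mxget M r c = 0.
Proof. by move=> h; rewrite /mxget; case: (insub r) => // x; rewrite insubN // -leqNgt. Qed.

Lemma mxget_p0 p q (M : 'M[CC]_(p,q)) : (p = 0)%N \/ (q = 0)%N -> mxget M 0 0 = 0.
Proof. by case=> h; [rewrite mxget_outr ?h | rewrite mxget_outc ?h]. Qed.

Lemma mx_eq1 p q (M N : 'M[CC]_(p,q)) : (p <= 1)%N -> (q <= 1)%N ->
  ((0 < p)%N -> (0 < q)%N -> mxget M 0 0 = mxget N 0 0) -> M = N.
Proof.
move=> hp hq e; apply/matrixP=> i j.
have i0 : nat_of_ord i = 0%N by move: (ltn_ord i); case: (nat_of_ord i) => //= k; lia.
have j0 : nat_of_ord j = 0%N by move: (ltn_ord j); case: (nat_of_ord j) => //= k; lia.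
have pp : (0 < p)%N by move: (ltn_ord i); lia.
have qp : (0 < q)%N by move: (ltn_ord j); lia.
by rewrite -(mxgetE M) -(mxgetE N) i0 j0 e.
Qed.

Lemma mxget_mul p m q (A : 'M[CC]_(p,m)) (B : 'M[CC]_(m,q)) : (m <= 1)%N ->
  mxget (A *m B) 0 0 = mxget A 0 0 * mxget B 0 0.
Proof.
case: p A => [|p] A.
  by rewrite (mxget_p0 (A *m B)) ?(mxget_p0 A) ?mul0r //; left.
case: q B => [|q] B.
  by rewrite (mxget_p0 (A *m B)) ?(mxget_p0 B) ?mulr0 //; right.
case: m A B => [|[|m]] A B // _.
  by rewrite mxget0 mxE big_ord0 (mxget_p0 A) ?mul0r //; right.
by rewrite !mxget0 mxE big_ord1.
Qed.

Lemma mxget_cast p q p' q' (e : (p = p') * (q = q')) (M : 'M[CC]_(p,q)) r c :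
  mxget (castmx e M) r c = mxget M r c.
Proof. by case: e => e1 e2; subst; rewrite castmx_id. Qed.

Lemma mxget_scalar p (a : CC) : (0 < p)%N -> mxget (a%:M : 'M_p) 0 0 = a.
Proof. by case: p => // p _; rewrite mxget0 mxE eqxx mulr1n. Qed.

Lemma mxget_inv p (M : 'M[CC]_p) : (p <= 1)%N -> mxget (invmx M) 0 0 = (mxget M 0 0)^-1.
Proof.
case: p M => [|[|p]] M // _; first by rewrite (mxget_p0 (invmx M)) ?(mxget_p0 M) ?invr0 //; left.
by rewrite [M]mx11_scalar invmx_scalar !mxget0 !mxE !eqxx !mulr1n.
Qed.

Lemma mxget_scale p q (a : CC) (M : 'M[CC]_(p,q)) r c : mxget (a *: M) r c = a * mxget M r c.
Proof. by rewrite /mxget; case: (insub r) => [x|]; [case: (insub c) => [y|] |]; rewrite ?mxE ?mulr0. Qed.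

Lemma mxget_idm p q : (0 < p)%N -> (0 < q)%N ->
  mxget (\matrix_(r, c) ((nat_of_ord r == nat_of_ord c)%:R : CC) : 'M_(p,q)) 0 0 = 1.
Proof. by case: p => // p; case: q => // q _ _; rewrite mxget0 mxE. Qed.

Lemma mxget_tens m1 n1 m2 n2 (A : 'M[CC]_(m1,n1)) (B : 'M[CC]_(m2,n2)) :
  mxget (A *t B) 0 0 = mxget A 0 0 * mxget B 0 0.
Proof.
case: m1 A => [|m1] A.
  by rewrite (mxget_p0 (A *t B)) ?(mxget_p0 A) ?mul0r //; left.
case: n1 A => [|n1] A.
  by rewrite (mxget_p0 (A *t B)) ?(mxget_p0 A) ?mul0r //; right; rewrite ?muln0.
case: m2 B => [|m2] B.
  by rewrite (mxget_p0 (A *t B)) ?(mxget_p0 B) ?mulr0 //; left; rewrite ?muln0.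
case: n2 B => [|n2] B.
  by rewrite (mxget_p0 (A *t B)) ?(mxget_p0 B) ?mulr0 //; right; rewrite ?muln0.
have := mxgetE (A *t B) (mxtens_index (ord0, ord0)) (mxtens_index (ord0, ord0)).
rewrite /= !mul0n !addn0 => ->.
by rewrite tensmxE !mxget0.
Qed.


Lemma mxget_mxblock m1 m2 (p_ : 'I_m1 -> nat) (q_ : 'I_m2 -> nat)
  (B : forall i j, 'M[CC]_(p_ i, q_ j)) i0 j0 :
  (forall i, i != i0 -> p_ i = 0%N) -> (forall j, j != j0 -> q_ j = 0%N) ->
  (p_ i0 <= 1)%N -> (q_ j0 <= 1)%N ->
  mxget (mxblock B) 0 0 = mxget (B i0 j0) 0 0.
Proof.
move=> hp hq hp1 hq1.
have sp : (\sum_i p_ i = p_ i0)%N.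
  by rewrite (bigD1 i0) //= big1 ?addn0 // => i /hp.
have sq : (\sum_j q_ j = q_ j0)%N.
  by rewrite (bigD1 j0) //= big1 ?addn0 // => i /hq.
case: (posnP (p_ i0)) => p0.
  by rewrite (mxget_p0 (mxblock B)) ?(mxget_p0 (B i0 j0)) //; left; rewrite ?sp.
case: (posnP (q_ j0)) => q0.
  by rewrite (mxget_p0 (mxblock B)) ?(mxget_p0 (B i0 j0)) //; right; rewrite ?sq.
have r0 : (0 < \sum_i p_ i)%N by rewrite sp.
have c0 : (0 < \sum_j q_ j)%N by rewrite sq.
have := mxgetE (mxblock B) (Ordinal r0) (Ordinal c0); rewrite /= => ->.
rewrite mxE.
have e1 : tagnat.sig1 (Ordinal r0) = i0.
  apply/eqP; apply: contraT => ne; move: (tagnat.sig2 (Ordinal r0)).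
  by rewrite hp //; case.
have e2 : tagnat.sig1 (Ordinal c0) = j0.
  apply/eqP; apply: contraT => ne; move: (tagnat.sig2 (Ordinal c0)).
  by rewrite hq //; case.
move: (tagnat.sig2 (Ordinal r0)) (tagnat.sig2 (Ordinal c0)).
rewrite e1 e2 => x y.
have x0 : nat_of_ord x = 0%N by move: (ltn_ord x); lia.
have y0 : nat_of_ord y = 0%N by move: (ltn_ord y); lia.
by rewrite -(mxgetE (B i0 j0)) x0 y0.
Qed.

Lemma mxget_matrix_mxget p q (M : 'M[CC]_(p,q)) :
  mxget (\matrix_(r, c) mxget M r c : 'M_(p,q)) 0 0 = mxget M 0 0.
Proof.
case: p M => [|p] M; first by rewrite !mxget_p0 //; left.
case: q M => [|q] M; first by rewrite !mxget_p0 //; right.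
by rewrite mxget0 mxE.
Qed.

Lemma mxget_bdiag m (p_ q_ : 'I_m -> nat) (B : forall i, 'M[CC]_(p_ i, q_ i)) i0 :
  (forall i, i != i0 -> p_ i = 0%N) -> (forall j, j != i0 -> q_ j = 0%N) ->
  (p_ i0 <= 1)%N -> (q_ i0 <= 1)%N ->
  mxget (bdiag B) 0 0 = mxget (B i0) 0 0.
Proof.
move=> hp hq hp1 hq1; rewrite /bdiag (mxget_mxblock _ hp hq) //.
by rewrite eqxx mxget_matrix_mxget.
Qed.

Lemma mxget_mxdiag m (p_ : 'I_m -> nat) (B : forall i, 'M[CC]_(p_ i)) i0 :
  (forall i, i != i0 -> p_ i = 0%N) -> (p_ i0 <= 1)%N ->
  mxget (mxdiag B) 0 0 = mxget (B i0) 0 0.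
Proof.
move=> hp hp1; rewrite /mxdiag (mxget_mxblock _ hp hp) //.
by rewrite eqxx conform_mx_id.
Qed.


Section S.
Variable n : nat.
Implicit Types (s t : 'S_n) (R : 'M[nat]_n).

Lemma Pmat_E s i j : Pmat s i j = (i == s j) :> nat.
Proof. by rewrite mxE. Qed.

Lemma nid_E i j : (@nid n) i j = (i == j) :> nat.
Proof. by rewrite mxE. Qed.

Lemma nid_Pmat : @nid n = Pmat 1%g.
Proof. by apply/matrixP => i j; rewrite nid_E Pmat_E perm1. Qed.

Lemma Pmat_le1 s i j : (Pmat s i j <= 1)%N.
Proof. by rewrite Pmat_E; case: (_ == _). Qed.

Lemma Pmat_pos s i j : (0 < Pmat s i j)%N -> i = s j.
Proof. by rewrite Pmat_E; case: eqP. Qed.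

Lemma Pmat_0 s i j : i != s j -> Pmat s i j = 0%N.
Proof. by rewrite Pmat_E => /negPf ->. Qed.

Lemma Pmat_1 s j : Pmat s (s j) j = 1%N.
Proof. by rewrite Pmat_E eqxx. Qed.

Lemma pmulE s t j : pmul s t j = s (t j).
Proof. by rewrite /pmul permM. Qed.

Lemma nmul_Pmat s t : nmul (Pmat s) (Pmat t) = Pmat (pmul s t).
Proof.
apply/matrixP => i j; rewrite mxE (bigD1 (t j)) //= big1 ?addn0.
  by rewrite !Pmat_E eqxx muln1 pmulE.
by move=> k /negPf hk; rewrite (Pmat_E t) hk muln0.
Qed.

Lemma Rapp_Pmat s m : Rapp (Pmat s) (evec m) = evec (s m).
Proof. by apply: functional_extensionality => i; rewrite Rapp_evec Pmat_E. Qed.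

Lemma Pmat_inj s t : Pmat s = Pmat t -> s = t.
Proof.
move=> e; apply/permP => j; apply/esym/Pmat_pos.
by rewrite e Pmat_1.
Qed.

Lemma twomor_eq R R' (T1 T2 : twomor R R') :
  (forall i j, R i j <= 1)%N -> (forall i j, R' i j <= 1)%N ->
  (forall i j, 0 < R i j -> 0 < R' i j -> mxget (T1 i j) 0 0 = mxget (T2 i j) 0 0)%N ->
  T1 = T2.
Proof.
move=> h1 h2 h; apply: functional_extensionality_dep => i.
apply: functional_extensionality_dep => j.
by apply: mx_eq1 => // a b; apply: h.
Qed.

Lemma iso_nz R R' (T : twomor R R') i j : iso2 T -> (0 < R i j)%N -> (R' i j <= 1)%N ->
  mxget (T i j) 0 0 != 0.
Proof.
case=> T' [e1 _] hp hl.
have := congr1 (fun F : twomor R R => mxget (F i j) 0 0) e1.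
rewrite /= /vcomp /id2 mxget_mul // mxget_scalar //.
move=> e; apply/eqP => h0; move: e; rewrite h0 mulr0 => /eqP; by rewrite eq_sym oner_eq0.
Qed.

Lemma inv2_spec R R' (T : twomor R R') : iso2 T ->
  vcomp (inv2 T) T = id2 R /\ vcomp T (inv2 T) = id2 R'.
Proof.
move=> h; exact: (epsilon_spec (inhabits (fun i j => 0)) (fun T' : twomor R' R => vcomp T' T = id2 R /\ vcomp T T' = id2 R') h).
Qed.

Lemma inv2E R R' (T : twomor R R') i j : iso2 T -> (0 < R i j)%N -> (R' i j <= 1)%N ->
  mxget (inv2 T i j) 0 0 = (mxget (T i j) 0 0)^-1.
Proof.
move=> h hp hl; have nz := iso_nz h hp hl.
case: (inv2_spec h) => e1 _.
have := congr1 (fun F : twomor R R => mxget (F i j) 0 0) e1.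
rewrite /= /vcomp /id2 mxget_mul // mxget_scalar // => e.
by rewrite -[LHS](mulfK nz) e mul1r.
Qed.

Lemma iso_of R R' (T : twomor R R') :
  (forall i j, R i j = R' i j) -> (forall i j, R i j <= 1)%N ->
  (forall i j, (0 < R i j)%N -> mxget (T i j) 0 0 != 0) -> iso2 T.
Proof.
move=> e hl hnz.
have hl' : forall i j, (R' i j <= 1)%N by move=> i j; rewrite -e.
exists (fun i j => (mxget (T i j) 0 0)^-1 *: idmor R' R i j); split.
  apply: twomor_eq => // i j hp _; rewrite /vcomp /id2 mxget_mul //.
  rewrite mxget_scale mxget_idm -?e // mxget_scalar // mulr1 mulVf //.
  exact: hnz.
apply: twomor_eq => // i j hp _; rewrite /vcomp /id2 mxget_mul //.
rewrite mxget_scale mxget_idm ?e // mxget_scalar // mulr1 mulfV //.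
by apply: hnz; rewrite e.
Qed.

Lemma iso_sizes R R' (T : twomor R R') : iso2 T -> forall i j, R i j = R' i j.
Proof.
case=> T' [e1 e2] i j.
have h1 := congr1 (fun F : twomor R R => F i j) e1.
have h2 := congr1 (fun F : twomor R' R' => F i j) e2.
rewrite /= /vcomp /id2 in h1 h2.
apply/eqP; rewrite eqn_leq; apply/andP; split.
  by rewrite -[X in (X <= _)%N](mxrank1 CC) -h1 (leq_trans (mxrankM_maxr _ _)) // rank_leq_row.
by rewrite -[X in (X <= _)%N](mxrank1 CC) -h2 (leq_trans (mxrankM_maxr _ _)) // rank_leq_row.
Qed.

End S.


Section S.
Variable n : nat.
Implicit Types (s t : 'S_n) (R : 'M[nat]_n).

Lemma perm_of R R' : (forall i j, nmul R' R i j = nid n i j) ->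
  (forall i j, nmul R R' i j = nid n i j) -> exists s : 'S_n, R = Pmat s.
Proof.
move=> H1 H2.
have h1 i j : (\sum_k R' i k * R k j)%N = (i == j) :> nat.
  by have := H1 i j; rewrite mxE nid_E.
have h2 i j : (\sum_k R i k * R' k j)%N = (i == j) :> nat.
  by have := H2 i j; rewrite mxE nid_E.
pose kf j := odflt j [pick k | (0 < R' j k * R k j)%N].
have kfP j : (0 < R' j (kf j) * R (kf j) j)%N.
  rewrite /kf; case: pickP => //= H.
  have := h1 j j; rewrite eqxx big1 // => k _.
  by have := H k; rewrite lt0n => /negbFE/eqP.
have cs i j : i != j -> R' i (kf j) = 0%N.
  move=> /negPf ne; have := h1 i j; rewrite ne (bigD1 (kf j)) //= => /eqP.
  rewrite addn_eq0 muln_eq0 => /andP [/orP [/eqP //|/eqP h] _].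
  by move: (kfP j); rewrite h muln0.
have Rc k j : R k j = (k == kf j) :> nat.
  have := h2 k (kf j); rewrite (bigD1 j) //= big1 ?addn0; last first.
    by move=> m /cs ->; rewrite muln0.
  case: eqP => [<-|_].
    by move/eqP; rewrite muln_eq1 => /andP [/eqP -> _].
  move/eqP; rewrite muln_eq0 => /orP [/eqP //|/eqP h].
  by move: (kfP j); rewrite h mul0n.
have kinj : injective kf.
  move=> j j' e; apply/eqP; apply: contraT => ne.
  by move: (kfP j); rewrite e (cs _ _ ne) mul0n.
exists (perm kinj); apply/matrixP => i j; rewrite Rc Pmat_E permE.
by [].
Qed.

Definition fP (x : mor1 n) : 'S_n := odflt 1%g [pick s | mat x == Pmat s].

Lemma fP_E (x : mor1 n) s : mat x = Pmat s -> fP x = s.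
Proof.
move=> e; rewrite /fP; case: pickP => /= [t /eqP e'|H].
  by apply: Pmat_inj; rewrite -e -e'.
by have := H s; rewrite e eqxx.
Qed.

Lemma isObj_Pmat (x : mor1 n) : isObj x -> mat x = Pmat (fP x).
Proof.
case=> _ [R' [_ [[T1 h1] [T2 h2]]]].
have [s e] := perm_of (iso_sizes h1) (iso_sizes h2).
by rewrite (fP_E e).
Qed.

Definition nrml (y : mor1 n) := forall k m,
  (0 < Rapp (mat y) (evec m) k)%N -> mxget (gau y k (evec m)) 0 0 = 1.

Lemma normal_gauge (y : mor1 n) : is_gauge (gau y) -> nrml y.
Proof. by case=> _ h k m hp; rewrite h mxget_scalar. Qed.

Lemma Rapp_le1 (y : mor1 n) s m k : mat y = Pmat s -> (Rapp (mat y) (evec m) k <= 1)%N.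
Proof. by move=> e; rewrite Rapp_evec e Pmat_le1. Qed.

Lemma hcompE (yt yt' x x' : mor1 n) Tt T (a b : 'S_n) k j :
  mat yt = Pmat a -> mat yt' = Pmat a -> mat x = Pmat b -> mat x' = Pmat b ->
  nrml yt -> nrml yt' -> k = a (b j) ->
  mxget (hcomp yt yt' x x' Tt T k j) 0 0 = mxget (Tt k (b j)) 0 0 * mxget (T (b j) j) 0 0.
Proof.
move=> Ey Ey' Ex Ex' Ny Ny' ek.
have le1 : forall (u v : mor1 n), mat u = Pmat a -> mat v = Pmat b -> (nmul (mat u) (mat v) k j <= 1)%N.
  by move=> u v -> ->; rewrite nmul_Pmat Pmat_le1.
rewrite /hcomp mxget_mul ?le1 // mxget_mul ?le1 // !mxget_cast.
have -> : mxget (gau yt' k (Rapp (mat x') (evec j))) 0 0 = 1.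
  rewrite Ex' Rapp_Pmat Ny' // Rapp_evec Ey' ek Pmat_1 //.
have -> : mxget (invmx (gau yt k (Rapp (mat x) (evec j)))) 0 0 = 1.
  rewrite mxget_inv; last by rewrite Rapp_nmul Rapp_evec le1.
  by rewrite Ex Rapp_Pmat Ny ?invr1 // Rapp_evec Ey ek Pmat_1.
rewrite (@mxget_bdiag _ _ _ _ (b j)).
- by rewrite mxget_tens mul1r mulr1.
- by move=> i ne; rewrite Ex' Pmat_0 ?muln0.
- by move=> i ne; rewrite Ex Pmat_0 ?muln0.
- by rewrite Ey' Ex' -[1%N]/(1 * 1)%N leq_mul ?Pmat_le1.
- by rewrite Ey Ex -[1%N]/(1 * 1)%N leq_mul ?Pmat_le1.
Qed.

End S.


Lemma castmx_scalar p p' (e : (p = p') * (p = p')) (a : CC) : castmx e a%:M = a%:M.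
Proof. by case: e => e1 e2; subst; rewrite castmx_id. Qed.

Lemma tens11 p q : (1%:M : 'M[CC]_p) *t (1%:M : 'M[CC]_q) = 1%:M.
Proof.
apply/matrixP => i j.
case: (mxtens_indexP i) => i0 i1; case: (mxtens_indexP j) => j0 j1.
rewrite tensmxE !mxE.
rewrite (inj_eq (can_inj (@mxtens_indexK _ _))) xpair_eqE.
by case: (i0 == j0); case: (i1 == j1); rewrite /= ?mulr1 ?mul1r ?mulr0.
Qed.

Lemma mxdiag1 m (p_ : 'I_m -> nat) : \mxdiag_(i < m) (1%:M : 'M[CC]_(p_ i)) = 1%:M.
Proof.
elim: m p_ => [|m IH] p_.
  by apply/matrixP => i; have := ltn_ord i; rewrite {2}big_ord0.
rewrite mxdiag_recl (IH (fun i => p_ (lift ord0 i))) -scalar_mx_block.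
by rewrite castmx_scalar.
Qed.

Section S.
Variable n : nat.
Implicit Types (s t : 'S_n) (R : 'M[nat]_n).

Lemma normal_comp (u v : mor1 n) a b : is_gauge (gau u) -> is_gauge (gau v) ->
  mat u = Pmat a -> mat v = Pmat b -> nrml (comp1 u v).
Proof.
move=> Gu Gv Eu Ev k m hp.
have Nu := normal_gauge Gu; have Nv := normal_gauge Gv.
have hk : k = a (b m).
  by move: hp; rewrite /= Rapp_evec Eu Ev nmul_Pmat => /Pmat_pos; rewrite pmulE.
have le1 : (Rapp (nmul (mat u) (mat v)) (evec m) k <= 1)%N.
  by rewrite Rapp_evec Eu Ev nmul_Pmat Pmat_le1.
rewrite /= /gcomp mulmx1 mxget_mul // !mxget_cast mxget_mul ?Rapp_nmul //.
have F1 : mxget (gau u k (Rapp (mat v) (evec m))) 0 0 = 1.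
  by rewrite Ev Rapp_Pmat Nu // Rapp_evec Eu hk Pmat_1.
rewrite F1 mul1r.
rewrite (@mxget_mxdiag _ _ _ (b m)); first last.
- by rewrite Eu -[1%N]/(1 * 1)%N leq_mul ?Pmat_le1 // Rapp_evec Ev Pmat_le1.
- by move=> i ne; rewrite Rapp_evec Ev Pmat_0 ?muln0.
rewrite (@mxget_mxdiag _ _ _ m); first last.
- by rewrite /evec eqxx muln1 Rapp_nmul.
- by move=> j ne; rewrite /evec (negPf ne) muln0.
rewrite !mxget_tens mxget_inv; last by rewrite Rapp_nmul.
rewrite F1 invr1 mul1r !mxget_scalar ?mulr1 ?Nv //.
- by rewrite mulr1.
- by rewrite Rapp_evec Ev Pmat_1.
- by rewrite /evec eqxx.
- by rewrite Eu hk Pmat_1.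
Qed.

Lemma gcomp_triv s t k a :
  gcomp (triv_gauge (Pmat s)) (triv_gauge (Pmat t)) k a = 1%:M.
Proof.
rewrite /gcomp /triv_gauge mulmx1 mul1mx.
under eq_mxdiag => i do rewrite tens11.
under [X in _ *m castmx _ X]eq_mxdiag => i do rewrite invmx_scalar invr1 tens11.
by rewrite !mxdiag1 !castmx_scalar mulmx1.
Qed.

Lemma mor1_eq R R' (e : R = R') (g : gaugeT R) (g' : gaugeT R') :
  (forall i a, g i a = 1%:M) -> (forall i a, g' i a = 1%:M) -> Mor1 g = Mor1 g'.
Proof.
subst => h h'; congr Mor1.
apply: functional_extensionality_dep => i; apply: functional_extensionality_dep => a.
by rewrite h h'.
Qed.

Lemma comp1_EObj s t : comp1 (EObj s) (EObj t) = EObj (pmul s t).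
Proof.
by apply: (mor1_eq (nmul_Pmat s t)) => // i a; rewrite gcomp_triv.
Qed.

Lemma triv_is_gauge R : is_gauge (triv_gauge R).
Proof. by split => // i a; rewrite /triv_gauge unitmx1. Qed.

End S.


Section S.
Variable n : nat.
Implicit Types (s t : 'S_n) (R : 'M[nat]_n).

Lemma vcompE R R' R'' (A : twomor R' R'') (B : twomor R R') i j :
  (R' i j <= 1)%N -> mxget (vcomp A B i j) 0 0 = mxget (A i j) 0 0 * mxget (B i j) 0 0.
Proof. by move=> h; rewrite /vcomp mxget_mul. Qed.

Lemma idmorE R R' i j : (0 < R i j)%N -> (0 < R' i j)%N -> mxget (idmor R R' i j) 0 0 = 1.
Proof. by move=> h1 h2; rewrite /idmor mxget_idm. Qed.

Lemma id2E R i j : (0 < R i j)%N -> mxget (id2 R i j) 0 0 = 1.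
Proof. by move=> h; rewrite /id2 mxget_scalar. Qed.

Lemma EmorE s t l i j : (0 < Pmat s i j)%N -> (0 < Pmat t i j)%N ->
  mxget (Emor s t l i j) 0 0 = l i.
Proof. by move=> h1 h2; rewrite /Emor mxget_scale mxget_idm ?mulr1. Qed.

Lemma pmulA s1 s2 s3 : pmul (pmul s1 s2) s3 = pmul s1 (pmul s2 s3).
Proof. by rewrite /pmul mulgA. Qed.

Lemma le1P R w i j : R = Pmat w -> (R i j <= 1)%N.
Proof. by move=> ->; apply: Pmat_le1. Qed.

Lemma posP R w j : R = Pmat w -> (0 < R (w j) j)%N.
Proof. by move=> ->; rewrite Pmat_1. Qed.

Lemma posE R w i j : R = Pmat w -> (0 < R i j)%N -> i = w j.
Proof. by move=> ->; apply: Pmat_pos. Qed.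

Lemma nrml_EObj s : nrml (EObj s).
Proof. exact/normal_gauge/triv_is_gauge. Qed.

Lemma nrml_id1 : nrml (id1 n).
Proof. exact/normal_gauge/triv_is_gauge. Qed.

Lemma iso_Pmat_eq R R' w (T : twomor R R') : R = Pmat w -> R' = Pmat w ->
  (forall j, mxget (T (w j) j) 0 0 != 0) -> iso2 T.
Proof.
move=> e e'; move=> h; apply: iso_of.
- by move=> i j; rewrite e e'.
- by move=> i j; apply: le1P e.
- by move=> i j /(posE e) ->.
Qed.

Lemma twomor_eqP R R' w (T1 T2 : twomor R R') : R = Pmat w -> R' = Pmat w ->
  (forall j, mxget (T1 (w j) j) 0 0 = mxget (T2 (w j) j) 0 0) -> T1 = T2.
Proof.
move=> e e' h; apply: twomor_eq.
- by move=> i j; apply: le1P e.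
- by move=> i j; apply: le1P e'.
- by move=> i j /(posE e) ->.
Qed.

Lemma isObj_EObj s : isObj (EObj s).
Proof.
split; first exact: triv_is_gauge.
exists (Pmat (s^-1)%g); split; first by exists (triv_gauge _); exact: triv_is_gauge.
have e1 : nmul (Pmat (s^-1)%g) (Pmat s) = Pmat 1%g by rewrite nmul_Pmat /pmul mulgV.
have e2 : nmul (Pmat s) (Pmat (s^-1)%g) = Pmat 1%g by rewrite nmul_Pmat /pmul mulVg.
split.
  exists (idmor _ _); apply: (iso_Pmat_eq e1 (nid_Pmat n)) => j.
  by rewrite idmorE ?oner_neq0 // ?(posP _ e1) ?(posP _ (nid_Pmat n)).
exists (idmor _ _); apply: (iso_Pmat_eq e2 (nid_Pmat n)) => j.
by rewrite idmorE ?oner_neq0 // ?(posP _ e2) ?(posP _ (nid_Pmat n)).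
Qed.

Lemma id1_EObj : id1 n = EObj 1%g.
Proof. rewrite /id1 /EObj. by case: _ / (nid_Pmat n). Qed.

Lemma iso_Emor s l : nonzero l -> iso2 (Emor s s l).
Proof.
move=> nz; apply: (iso_Pmat_eq (w := s)) => // j.
by rewrite EmorE ?Pmat_1.
Qed.

Lemma iso_E2 s t : iso2 (E2 s t).
Proof.
apply: (iso_Pmat_eq (w := pmul s t)); first exact: nmul_Pmat.
  by [].
move=> j; rewrite /E2 idmorE ?oner_neq0 // ?Pmat_1 //.
by rewrite /= nmul_Pmat Pmat_1.
Qed.

Lemma iso_E0 : iso2 (E0 n).
Proof.
apply: (iso_Pmat_eq (w := 1%g)); first exact: nid_Pmat.
  by [].
by move=> j; rewrite /E0 idmorE ?oner_neq0 // ?Pmat_1 // (posP _ (nid_Pmat n)).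
Qed.

Lemma Emor_mul s l l' : Emor s s (fun i => l i * l' i) = vcomp (Emor s s l) (Emor s s l').
Proof.
apply: (twomor_eqP (w := s)) => // j.
by rewrite vcompE ?Pmat_le1 // !EmorE ?Pmat_1.
Qed.

Lemma Emor_1 s : Emor s s (fun _ => 1) = id2 (Pmat s).
Proof.
apply: (twomor_eqP (w := s)) => // j.
by rewrite EmorE ?id2E ?Pmat_1.
Qed.

Lemma E_nat s1 s2 l1 l2 :
  vcomp (E2 s1 s2) (hcomp (EObj s1) (EObj s1) (EObj s2) (EObj s2)
                          (Emor s1 s1 l1) (Emor s2 s2 l2)) =
  vcomp (Emor (pmul s1 s2) (pmul s1 s2) (fun i => l1 i * sact s1 l2 i)) (E2 s1 s2).
Proof.
have e : mat (comp1 (EObj s1) (EObj s2)) = Pmat (pmul s1 s2) by rewrite /= nmul_Pmat.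
apply: (twomor_eqP e) => // j.
rewrite !vcompE ?Pmat_le1 ?(le1P _ _ e) //.
rewrite /E2 idmorE ?(posP _ e) ?Pmat_1 // mul1r.
rewrite (@hcompE _ _ _ _ _ _ _ s1 s2) //; try exact: nrml_EObj; last by rewrite pmulE.
rewrite !EmorE ?Pmat_1 // ?pmulE ?Pmat_1 //.
by rewrite mulr1 /sact permK.
Qed.

End S.


Section S.
Variable n : nat.
Implicit Types (s t : 'S_n) (R : 'M[nat]_n).

Lemma nrml_cE s t : nrml (comp1 (EObj s) (EObj t)).
Proof. by apply: (@normal_comp _ (EObj s) (EObj t) s t) => //; apply: triv_is_gauge. Qed.

Lemma E_assoc s1 s2 s3 :
      vcomp (Emor (pmul (pmul s1 s2) s3) (pmul s1 (pmul s2 s3)) (fun _ => 1))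
        (vcomp (E2 (pmul s1 s2) s3)
           (hcomp (comp1 (EObj s1) (EObj s2)) (EObj (pmul s1 s2)) (EObj s3) (EObj s3)
                  (E2 s1 s2) (id2 _))) =
      vcomp (E2 s1 (pmul s2 s3))
        (vcomp (hcomp (EObj s1) (EObj s1) (comp1 (EObj s2) (EObj s3)) (EObj (pmul s2 s3))
                      (id2 _) (E2 s2 s3))
               (assocE (EObj s1) (EObj s2) (EObj s3))).
Proof.
set w := pmul s1 (pmul s2 s3).
have e12 : mat (comp1 (EObj s1) (EObj s2)) = Pmat (pmul s1 s2) by rewrite /= nmul_Pmat.
have e23 : mat (comp1 (EObj s2) (EObj s3)) = Pmat (pmul s2 s3) by rewrite /= nmul_Pmat.
have eL : mat (comp1 (comp1 (EObj s1) (EObj s2)) (EObj s3)) = Pmat w.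
  by rewrite /= !nmul_Pmat pmulA.
have eM : mat (comp1 (EObj (pmul s1 s2)) (EObj s3)) = Pmat w by rewrite /= nmul_Pmat pmulA.
have eR : mat (comp1 (EObj s1) (comp1 (EObj s2) (EObj s3))) = Pmat w by rewrite /= !nmul_Pmat.
have eN : mat (comp1 (EObj s1) (EObj (pmul s2 s3))) = Pmat w by rewrite /= nmul_Pmat.
have eW : Pmat (pmul (pmul s1 s2) s3) = Pmat w by rewrite pmulA.
apply: (twomor_eqP eL) => // j.
rewrite !vcompE ?(le1P _ _ eM) ?(le1P _ _ eW) ?(le1P _ _ eR) ?(le1P _ _ eN) //.
rewrite /Emor mxget_scale mxget_idm ?(posP _ eW) ?Pmat_1 // mulr1 mul1r.
rewrite /E2 /assocE !idmorE ?(posP _ eM) ?(posP _ eR) ?(posP _ eN) ?(posP _ eL) ?Pmat_1 //.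
rewrite (@hcompE _ _ _ _ _ _ _ (pmul s1 s2) s3) //; try exact: nrml_EObj; try exact: nrml_cE;
  last by rewrite !pmulE.
rewrite (@hcompE _ _ _ _ _ _ _ s1 (pmul s2 s3)) //; try exact: nrml_EObj;
  last by rewrite !pmulE.
rewrite !idmorE ?id2E //; first by rewrite !mul1r.
all: rewrite /= ?nmul_Pmat Pmat_E; try rewrite /w; by rewrite ?pmulE eqxx.
Qed.

Ltac posx := rewrite /= ?nid_Pmat ?nmul_Pmat Pmat_E ?pmulE ?perm1 ?eqxx //.

Lemma E_lunit s :
      vcomp (Emor (pmul 1%g s) s (fun _ => 1))
        (vcomp (E2 1%g s) (hcomp (id1 n) (EObj 1%g) (EObj s) (EObj s) (E0 n) (id2 _))) =
      lunitE (EObj s).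
Proof.
have eL : mat (comp1 (id1 n) (EObj s)) = Pmat s.
  by rewrite /= nid_Pmat nmul_Pmat /pmul mulg1.
have eM : mat (comp1 (EObj 1%g) (EObj s)) = Pmat s by rewrite /= nmul_Pmat /pmul mulg1.
have eW : Pmat (pmul 1%g s) = Pmat s by rewrite /pmul mulg1.
apply: (twomor_eqP eL) => // j.
rewrite !vcompE ?(le1P _ _ eM) ?(le1P _ _ eW) //.
rewrite /Emor mxget_scale mxget_idm ?(posP _ eW) ?Pmat_1 // mulr1 mul1r.
rewrite /E2 /lunitE !idmorE ?(posP _ eM) ?(posP _ eL) ?Pmat_1 //.
rewrite (@hcompE _ _ _ _ _ _ _ 1%g s) //; try exact: nrml_EObj; try exact: nrml_id1;
  first last.
- by rewrite perm1.
- by rewrite /= nid_Pmat.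
rewrite /E0 idmorE ?id2E ?mulr1 ?mul1r //; posx.
all: posx.
Qed.

Lemma E_runit s :
      vcomp (Emor (pmul s 1%g) s (fun _ => 1))
        (vcomp (E2 s 1%g) (hcomp (EObj s) (EObj s) (id1 n) (EObj 1%g) (id2 _) (E0 n))) =
      runitE (EObj s).
Proof.
have eL : mat (comp1 (EObj s) (id1 n)) = Pmat s.
  by rewrite /= nid_Pmat nmul_Pmat /pmul mul1g.
have eM : mat (comp1 (EObj s) (EObj 1%g)) = Pmat s by rewrite /= nmul_Pmat /pmul mul1g.
have eW : Pmat (pmul s 1%g) = Pmat s by rewrite /pmul mul1g.
apply: (twomor_eqP eL) => // j.
rewrite !vcompE ?(le1P _ _ eM) ?(le1P _ _ eW) //.
rewrite /Emor mxget_scale mxget_idm ?(posP _ eW) ?Pmat_1 // mulr1 mul1r.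
rewrite /E2 /runitE !idmorE ?(posP _ eM) ?(posP _ eL) ?Pmat_1 //.
rewrite (@hcompE _ _ _ _ _ _ _ s 1%g) //; try exact: nrml_EObj; try exact: nrml_id1;
  first last.
- by rewrite perm1.
- by rewrite /= nid_Pmat.
rewrite /E0 idmorE ?id2E ?mulr1 ?mul1r //; posx.
all: posx.
Qed.

Lemma Emor_inj s l l' : Emor s s l = Emor s s l' -> l = l'.
Proof.
move=> e; apply: functional_extensionality => i.
have := congr1 (fun F : twomor (Pmat s) (Pmat s) => mxget (F i ((s^-1)%g i)) 0 0) e.
by rewrite /= !EmorE // Pmat_E permKV eqxx.
Qed.

Lemma E_full s t (T : twomor (Pmat s) (Pmat t)) : iso2 T ->
  s = t /\ exists l, nonzero l /\ T = Emor s t l.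
Proof.
move=> hT.
have est : s = t.
  by apply: Pmat_inj; apply/matrixP => i j; exact: (iso_sizes hT i j).
subst t; split => //.
exists (fun i => mxget (T i ((s^-1)%g i)) 0 0); split.
  by move=> i; apply: iso_nz => //; rewrite Pmat_E permKV eqxx.
apply: (twomor_eqP (w := s)) => // j.
by rewrite EmorE ?Pmat_1 // permK.
Qed.

Lemma E_esurj (x : mor1 n) : isObj x -> exists (s : 'S_n) (T : twomor (Pmat s) (mat x)), iso2 T.
Proof.
move=> hx; have ex := isObj_Pmat hx.
exists (fP x), (idmor _ _); apply: (iso_Pmat_eq (w := fP x)) => // j.
by rewrite idmorE ?oner_neq0 // ?Pmat_1 // ex Pmat_1.
Qed.

End S.


Section S.
Variable n : nat.
Implicit Types (s t : 'S_n) (R : 'M[nat]_n).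

Lemma fP_comp (x y : mor1 n) : isObj x -> isObj y -> fP (comp1 x y) = pmul (fP x) (fP y).
Proof.
by move=> hx hy; apply: fP_E; rewrite /= (isObj_Pmat hx) (isObj_Pmat hy) nmul_Pmat.
Qed.

Lemma fP_iff (x y : mor1 n) : isObj x -> isObj y ->
  (fP x = fP y <-> exists T : twomor (mat x) (mat y), iso2 T).
Proof.
move=> hx hy; have ex := isObj_Pmat hx; have ey := isObj_Pmat hy.
split.
  move=> e; exists (idmor _ _); apply: (iso_Pmat_eq (w := fP x)) => //.
    by rewrite ey e.
  by move=> j; rewrite idmorE ?oner_neq0 // ?ex ?ey -?e Pmat_1.
case=> T hT; apply: Pmat_inj; rewrite -ex -ey.
by apply/matrixP => i j; exact: (iso_sizes hT i j).
Qed.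

Lemma fP_surj s : exists x, isObj x /\ fP x = s.
Proof. by exists (EObj s); split; [apply: isObj_EObj | apply: fP_E]. Qed.

Definition gg (u : twomor (nid n) (nid n)) (i : 'I_n) : CC := mxget (u i i) 0 0.

Lemma nid11 i : nid n i i = 1%N.
Proof. by rewrite nid_E eqxx. Qed.

Lemma nid_le1 i j : (nid n i j <= 1)%N.
Proof. by rewrite nid_E; case: (_ == _). Qed.

Lemma gg_nz u : iso2 u -> nonzero (gg u).
Proof. by move=> hu i; apply: iso_nz; rewrite ?nid11 ?nid_le1. Qed.

Lemma gg_mul u v : gg (vcomp u v) = (fun i => gg u i * gg v i).
Proof. by apply: functional_extensionality => i; rewrite /gg vcompE ?nid_le1. Qed.

Lemma gg_inj u v : gg u = gg v -> u = v.
Proof.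
move=> e; apply: (twomor_eqP (w := 1%g)); rewrite -?(nid_Pmat n) // => j.
by rewrite perm1; have := congr1 (fun f => f j) e.
Qed.

Lemma gg_surj l : nonzero l -> exists u, iso2 u /\ gg u = l.
Proof.
move=> nz; exists (fun i j => l i *: idmor (nid n) (nid n) i j); split.
  apply: (iso_Pmat_eq (w := 1%g)); rewrite -?(nid_Pmat n) // => j.
  by rewrite mxget_scale idmorE ?mulr1 // perm1 nid11.
apply: functional_extensionality => i.
by rewrite /gg mxget_scale idmorE ?mulr1 // nid11.
Qed.

Lemma gamma_delta (x : mor1 n) u v : isObj x -> iso2 u -> iso2 v ->
  gg v = sact (fP x) (gg u) -> gammaA x v = deltaA x u.
Proof.
move=> hx _ _ e; have ex := isObj_Pmat hx; set s := fP x in e ex.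
have Gx := normal_gauge (proj1 hx).
have eL : mat (comp1 (id1 n) x) = Pmat s by rewrite /= ex nid_Pmat nmul_Pmat /pmul mulg1.
have eR : mat (comp1 x (id1 n)) = Pmat s by rewrite /= ex nid_Pmat nmul_Pmat /pmul mul1g.
apply: (twomor_eqP ex ex) => j.
rewrite /gammaA /deltaA !vcompE ?(le1P _ _ eL) ?(le1P _ _ eR) //.
rewrite /lunitE /lunitE_inv /runitE /runitE_inv !idmorE ?(posP _ eL) ?(posP _ eR) ?(posP _ ex) //.
rewrite (@hcompE _ _ _ _ _ _ _ 1%g s) //; try exact: nrml_id1;
  last by rewrite perm1.
  2,3: by rewrite /= nid_Pmat.
rewrite (@hcompE _ _ _ _ _ _ _ s 1%g) //; try exact: nrml_id1;
  last by rewrite perm1.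
  2,3: by rewrite /= nid_Pmat.
rewrite !id2E ?perm1 ?(posP _ ex) //.
have := congr1 (fun f => f (s j)) e; rewrite /gg /sact /= permK => ->.
by rewrite !mulr1 !mul1r.
Qed.

End S.


Section S.
Variable n : nat.
Implicit Types (s t : 'S_n) (R : 'M[nat]_n).

Lemma sinh_triv (A : 'S_n -> mor1 n) : (forall s, isObj (A s) /\ fP (A s) = s) ->
  forall phi : forall s t, twomor (mat (comp1 (A s) (A t))) (mat (A (pmul s t))),
  (forall s t, iso2 (phi s t)) ->
  exists h : 'S_n -> 'S_n -> 'I_n -> CC,
    (forall s t, nonzero (h s t)) /\
    (forall x y z u, iso2 u -> gg u = cobound h x y z ->
       sinh_loop phi x y z = gammaA (A (pmul x (pmul y z))) u).
Proof.
move=> hA phi hphi.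
have EA s : mat (A s) = Pmat s by rewrite (isObj_Pmat (proj1 (hA s))) (proj2 (hA s)).
have GA s : is_gauge (gau (A s)) by case: (hA s) => [[]].
have NA s : nrml (A s) := normal_gauge (GA s).
have EC s t : mat (comp1 (A s) (A t)) = Pmat (pmul s t) by rewrite /= !EA nmul_Pmat.
pose h s t i := mxget (phi s t i ((pmul s t)^-1 i)%g) 0 0.
have hE s t j : h s t (pmul s t j) = mxget (phi s t (pmul s t j) j) 0 0.
  by rewrite /h permK.
exists h; split.
  move=> s t i; apply: iso_nz => //; last by rewrite EA Pmat_le1.
  by rewrite EC Pmat_E permKV eqxx.
move=> x y z u hu hg.
set w := pmul x (pmul y z).
have ew : pmul (pmul x y) z = w by rewrite pmulA.
have e1 : mat (comp1 (A x) (comp1 (A y) (A z))) = Pmat w by rewrite /= !EA !nmul_Pmat.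
have e2 : mat (comp1 (comp1 (A x) (A y)) (A z)) = Pmat w by rewrite /= !EA !nmul_Pmat pmulA.
have e3 : mat (comp1 (A (pmul x y)) (A z)) = Pmat w by rewrite EC ew.
have e4 : mat (A (pmul (pmul x y) z)) = Pmat w by rewrite EA ew.
have e5 : mat (comp1 (A x) (A (pmul y z))) = Pmat w by rewrite EC.
have e6 : mat (comp1 (id1 n) (A w)) = Pmat w by rewrite /= EA nid_Pmat nmul_Pmat /pmul mulg1.
have Nxy : nrml (comp1 (A x) (A y)) := normal_comp (GA x) (GA y) (EA x) (EA y).
have eyz : mat (comp1 (A y) (A z)) = Pmat (pmul y z) by apply: EC.
have H4 j : mxget (hcomp (comp1 (A x) (A y)) (A (pmul x y)) (A z) (A z) (phi x y)
                   (id2 (mat (A z))) (w j) j) 0 0 = h x y (w j).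
  rewrite (@hcompE _ _ _ _ _ _ _ (pmul x y) z) //; last by rewrite -ew pmulE.
  rewrite id2E ?(posP _ (EA z)) // mulr1.
  by rewrite -ew pmulE hE.
have iso4 : iso2 (hcomp (comp1 (A x) (A y)) (A (pmul x y)) (A z) (A z) (phi x y)
                   (id2 (mat (A z)))).
  apply: (iso_Pmat_eq e2 e3) => j; rewrite H4.
  rewrite -ew pmulE /h permK; apply: iso_nz => //; last by rewrite EA Pmat_le1.
  by rewrite EC Pmat_1.
apply: (twomor_eqP (EA w) (EA w)) => j.
rewrite /sinh_loop /gammaA.
rewrite !vcompE ?(le1P _ _ e1) ?(le1P _ _ e2) ?(le1P _ _ e3) ?(le1P _ _ e4) ?(le1P _ _ e5)
  ?(le1P _ _ e6) //.
rewrite /assocE /lunitE /lunitE_inv !idmorE ?(posP _ e1) ?(posP _ e2) ?(posP _ e6)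
  ?(posP _ (EA w)) ?(posP _ e4) //.
rewrite (inv2E iso4) ?(posP _ e2) ?(le1P _ _ e3) // H4.
rewrite (inv2E (hphi _ _)) ?(le1P _ _ e3) ?(posP _ e4) //.
rewrite (@hcompE _ _ _ _ _ _ _ x (pmul y z)) //; last by rewrite /w pmulE.
rewrite (@hcompE _ (id1 n) (id1 n) (A w) (A w) _ _ 1%g w _ _ (nid_Pmat n) (nid_Pmat n) (EA w) (EA w) (@nrml_id1 n) (@nrml_id1 n)); last by rewrite perm1.
rewrite !id2E; first last.
- by rewrite EA Pmat_E /w pmulE eqxx.
- by rewrite EA Pmat_1.
have hgj : mxget (u (w j) (w j)) 0 0 = cobound h x y z (w j) by exact: (congr1 (fun f => f (w j)) hg).
rewrite hgj.
rewrite /cobound /sact.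
have ex : (x^-1)%g (w j) = pmul y z j by rewrite /w pmulE permK.
rewrite ex hE.
have exy : h (pmul x y) z (w j) = mxget (phi (pmul x y) z (w j) j) 0 0.
  have ej : ((pmul (pmul x y) z)^-1)%g (w j) = j by rewrite /w -pmulA permK.
  by rewrite /h ej.
rewrite exy hE.
ring.
all: try by rewrite ?e1 ?e2 ?e3 ?e4 ?e5 ?e6 ?EA ?Pmat_1 ?Pmat_le1.
Qed.

End S.

Theorem mainTheorem6 (n : nat) (hn : (0 < n)%N) :
  (* pi_0 = S_n, pi_1 = (C^* )^n with the stated action, trivial class *)
  (exists f : mor1 n -> 'S_n,
     (forall x y, isObj x -> isObj y -> f (comp1 x y) = pmul (f x) (f y)) /\
     (forall x y, isObj x -> isObj y ->
        (f x = f y <-> exists T : twomor (mat x) (mat y), iso2 T)) /\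
     (forall s : 'S_n, exists x, isObj x /\ f x = s) /\
     (exists g : twomor (mat (id1 n)) (mat (id1 n)) -> ('I_n -> CC),
        (forall u, iso2 u -> nonzero (g u)) /\
        (forall u v, iso2 u -> iso2 v -> g (vcomp u v) = (fun i => g u i * g v i)) /\
        (forall u v, iso2 u -> iso2 v -> g u = g v -> u = v) /\
        (forall l, nonzero l -> exists u, iso2 u /\ g u = l) /\
        (* [A].u = gamma_A^-1 delta_A (u) corresponds to f(A) . g(u) *)
        (forall x u v, isObj x -> iso2 u -> iso2 v ->
           g v = sact (f x) (g u) -> gammaA x v = deltaA x u) /\
        (* Sinh's class in H^3(S_n, (C^* )^n) is trivial *)
        (forall A : 'S_n -> mor1 n, (forall s, isObj (A s) /\ f (A s) = s) ->
         forall phi : forall s t, twomor (mat (comp1 (A s) (A t))) (mat (A (pmul s t))),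
         (forall s t, iso2 (phi s t)) ->
         exists h : 'S_n -> 'S_n -> 'I_n -> CC,
           (forall s t, nonzero (h s t)) /\
           (forall x y z u, iso2 u -> g u = cobound h x y z ->
              sinh_loop phi x y z = gammaA (A (pmul x (pmul y z))) u)))) /\
  (* E(n) : G(n) -> Equiv(n) is an equivalence of 2-groups *)
  ((forall s : 'S_n, isObj (EObj s)) /\
   (forall s t : 'S_n, comp1 (EObj s) (EObj t) = EObj (pmul s t)) /\
   id1 n = EObj (1%g : 'S_n) /\
   (forall (s : 'S_n) l, nonzero l -> iso2 (Emor s s l)) /\
   (forall s t : 'S_n, iso2 (E2 s t)) /\ iso2 (E0 n) /\
   (* functoriality *)
   (forall (s : 'S_n) l l', nonzero l -> nonzero l' ->
      Emor s s (fun i => l i * l' i) = vcomp (Emor s s l) (Emor s s l')) /\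
   (forall s : 'S_n, Emor s s (fun _ => 1) = id2 (Pmat s)) /\
   (* naturality of E_2 w.r.t. (s1,l1) (x) (s2,l2) = (s1 s2, l1 (s1 . l2)) *)
   (forall (s1 s2 : 'S_n) l1 l2, nonzero l1 -> nonzero l2 ->
      vcomp (E2 s1 s2) (hcomp (EObj s1) (EObj s1) (EObj s2) (EObj s2)
                              (Emor s1 s1 l1) (Emor s2 s2 l2)) =
      vcomp (Emor (pmul s1 s2) (pmul s1 s2) (fun i => l1 i * sact s1 l2 i)) (E2 s1 s2)) /\
   (* associativity coherence (identity associator in G(n)) *)
   (forall s1 s2 s3 : 'S_n,
      vcomp (Emor (pmul (pmul s1 s2) s3) (pmul s1 (pmul s2 s3)) (fun _ => 1))
        (vcomp (E2 (pmul s1 s2) s3)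
           (hcomp (comp1 (EObj s1) (EObj s2)) (EObj (pmul s1 s2)) (EObj s3) (EObj s3)
                  (E2 s1 s2) (id2 _))) =
      vcomp (E2 s1 (pmul s2 s3))
        (vcomp (hcomp (EObj s1) (EObj s1) (comp1 (EObj s2) (EObj s3)) (EObj (pmul s2 s3))
                      (id2 _) (E2 s2 s3))
               (assocE (EObj s1) (EObj s2) (EObj s3)))) /\
   (* unit coherences (identity unitors in G(n)) *)
   (forall s : 'S_n,
      vcomp (Emor (pmul 1%g s) s (fun _ => 1))
        (vcomp (E2 1%g s) (hcomp (id1 n) (EObj 1%g) (EObj s) (EObj s) (E0 n) (id2 _))) =
      lunitE (EObj s)) /\
   (forall s : 'S_n,
      vcomp (Emor (pmul s 1%g) s (fun _ => 1))
        (vcomp (E2 s 1%g) (hcomp (EObj s) (EObj s) (id1 n) (EObj 1%g) (id2 _) (E0 n))) =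
      runitE (EObj s)) /\
   (* the underlying functor is an equivalence: fully faithful ... *)
   (forall (s : 'S_n) l l', nonzero l -> nonzero l' -> Emor s s l = Emor s s l' -> l = l') /\
   (forall (s t : 'S_n) (T : twomor (Pmat s) (Pmat t)), iso2 T ->
      s = t /\ exists l, nonzero l /\ T = Emor s t l) /\
   (* ... and essentially surjective *)
   (forall x : mor1 n, isObj x ->
      exists (s : 'S_n) (T : twomor (Pmat s) (mat x)), iso2 T)).
Proof.
split.
  exists (@fP n); split; first exact: fP_comp.
  split; first exact: fP_iff.
  split; first exact: fP_surj.
  exists (@gg n); split; first exact: gg_nz.
  split; first by move=> u v _ _; apply: gg_mul.
  split; first by move=> u v _ _; apply: gg_inj.
  split; first exact: gg_surj.
  split; first exact: gamma_delta.
  exact: sinh_triv.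
split; first exact: isObj_EObj.
split; first exact: comp1_EObj.
split; first exact: id1_EObj.
split; first by move=> s l; apply: iso_Emor.
split; first exact: iso_E2.
split; first exact: iso_E0.
split; first by move=> s l l' _ _; apply: Emor_mul.
split; first exact: Emor_1.
split; first by move=> s1 s2 l1 l2 _ _; apply: E_nat.
split; first exact: E_assoc.
split; first exact: E_lunit.
split; first exact: E_runit.
split; first by move=> s l l' _ _; apply: Emor_inj.
split; first exact: E_full.
exact: E_esurj.
Qed.
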